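(* Let $(V,m)$ be a discrete measure space and $(b,c)$ a graph over $(V,m)$ satisfying (FC), i.e. $\widetilde L C_c(V)\subseteq\ell^2(V,m)$. Let $L$ be a non-negative selfadjoint operator on $\ell^2(V,m)$ with associated form $Q$. Then the following are equivalent: (i) $Q$ satisfies condition (C) with respect to $(b,c)$; (ii) $L$ is a restriction of $\widetilde L$.
   Context: $V$ is a finite or countably infinite set and $m:V\to(0,\infty)$; $(V,m)$ is a discrete measure space. $C(V)$ is the set of all functions $V\to\mathbb C$, $C_c(V)$ the finitely supported ones, and $\ell^2(V,m)$ carries $\langle u,v\rangle=\sum_x u(x)\overline{v(x)}m(x)$. A graph over $(V,m)$ is a pair $(b,c)$ with $c:V\to[0,\infty)$, $b:V\times V\to[0,\infty)$, $b(x,x)=0$, $b(x,y)=b(y,x)$, $\sum_y b(x,y)<\infty$. Let $\widetilde F=\{u\in C(V):\sum_y|b(x,y)u(y)|<\infty\ \forall x\}$ and $\widetilde L u(x)=\frac{1}{m(x)}\sum_y b(x,y)(u(x)-u(y))+\frac{c(x)}{m(x)}u(x)$ for $u\in\widetilde F$. ''$L$ is a restriction of $\widetilde L$'' means the domain of $L$ is contained in $\widetilde F$ and $Lu=\widetilde Lu$ there. The form associated to a non-negative selfadjoint $L$ is $Q(u,v)=\langle L^{1/2}u,L^{1/2}v\rangle$ on $D(Q)=D(L^{1/2})$. A symmetric form $Q$ on $\ell^2(V,m)$ with domain $D$ satisfies condition (C) w.r.t. $(b,c)$ if: (C0) $Q$ is non-negative and closed; (C1) $C_c(V)\subseteq D$;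 (C2) for all $u\in D$ and $v\in C_c(V)$ the sum $\sum_x u(x)\overline{\widetilde L v(x)}m(x)$ converges absolutely and equals $Q(u,v)$. *)

(* Defs.v *)
From Stdlib Require Import Reals List ClassicalEpsilon.
Open Scope R_scope.
Set Implicit Arguments.

Record Cplx := mkC { re : R; im : R }.
Definition C0 : Cplx := mkC 0 0.
Definition RtoC (r : R) : Cplx := mkC r 0.
Definition Cadd (z w : Cplx) : Cplx := mkC (re z + re w) (im z + im w).
Definition Copp (z : Cplx) : Cplx := mkC (- re z) (- im z).
Definition Csub (z w : Cplx) : Cplx := Cadd z (Copp w).
Definition Cmul (z w : Cplx) : Cplx :=
  mkC (re z * re w - im z * im w) (re z * im w + im z * re w).
Definition Cconj (z : Cplx) : Cplx := mkC (re z) (- im z).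
Definition Cnorm (z : Cplx) : R := sqrt (re z * re z + im z * im z).

(** * Unordered (unconditional) summation over an arbitrary index type *)
Section Sums.
Variable V : Type.

Definition fsumC (F : list V) (f : V -> Cplx) : Cplx := fold_right Cadd C0 (map f F).
Definition fsumR (F : list V) (f : V -> R) : R := fold_right Rplus 0 (map f F).

Definition has_sum (f : V -> Cplx) (s : Cplx) : Prop :=
  forall eps, 0 < eps -> exists F0 : list V, NoDup F0 /\
    forall F : list V, NoDup F -> incl F0 F -> Cnorm (Csub (fsumC F f) s) < eps.

Definition abs_summable (f : V -> Cplx) : Prop :=
  exists M, forall F : list V, NoDup F -> fsumR F (fun x => Cnorm (f x)) <= M.

(* the value of the sum (0 if the sum does not exist) *)
Definition csum (f : V -> Cplx) : Cplx :=
  epsilon (inhabits C0) (fun s => has_sum f s).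
End Sums.

Definition countable (V : Type) : Prop :=
  exists enc : V -> nat, forall x y, enc x = enc y -> x = y.

Section L2.
Variable V : Type.
Variable m : V -> R.

Definition fzero : V -> Cplx := fun _ => C0.
Definition fadd (u v : V -> Cplx) : V -> Cplx := fun x => Cadd (u x) (v x).
Definition fsub (u v : V -> Cplx) : V -> Cplx := fun x => Csub (u x) (v x).
Definition fscale (a : Cplx) (u : V -> Cplx) : V -> Cplx := fun x => Cmul a (u x).

Definition l2 (u : V -> Cplx) : Prop :=
  abs_summable (fun x => Cmul (RtoC (m x)) (Cmul (u x) (Cconj (u x)))).

Definition inner (u v : V -> Cplx) : Cplx :=
  csum (fun x => Cmul (Cmul (u x) (Cconj (v x))) (RtoC (m x))).

Definition l2norm (u : V -> Cplx) : R := sqrt (re (inner u u)).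

Definition is_subspace (D : (V -> Cplx) -> Prop) : Prop :=
  D fzero /\ (forall u v, D u -> D v -> D (fadd u v)) /\
  (forall a u, D u -> D (fscale a u)).

Definition dense (D : (V -> Cplx) -> Prop) : Prop :=
  forall u, l2 u -> forall eps, 0 < eps -> exists d, D d /\ l2norm (fsub u d) < eps.

Definition operator (D : (V -> Cplx) -> Prop) (A : (V -> Cplx) -> (V -> Cplx)) : Prop :=
  is_subspace D /\ (forall u, D u -> l2 u /\ l2 (A u)) /\
  (forall u v, D u -> D v -> A (fadd u v) = fadd (A u) (A v)) /\
  (forall a u, D u -> A (fscale a u) = fscale a (A u)).

Definition selfadjoint (D : (V -> Cplx) -> Prop) (A : (V -> Cplx) -> (V -> Cplx)) : Prop :=
  operator D A /\ dense D /\
  forall v w, l2 v -> l2 w ->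
    ((forall u, D u -> inner (A u) v = inner u w) <-> (D v /\ A v = w)).

Definition nonneg_selfadjoint (D : (V -> Cplx) -> Prop) (A : (V -> Cplx) -> (V -> Cplx)) : Prop :=
  selfadjoint D A /\
  forall u, D u -> im (inner (A u) u) = 0 /\ 0 <= re (inner (A u) u).

Definition is_sqrt (DL : (V -> Cplx) -> Prop) (L : (V -> Cplx) -> (V -> Cplx))
  (DS : (V -> Cplx) -> Prop) (S : (V -> Cplx) -> (V -> Cplx)) : Prop :=
  nonneg_selfadjoint DS S /\
  (forall u, DL u <-> (DS u /\ DS (S u))) /\
  (forall u, DL u -> L u = S (S u)).

Definition form_nonneg (D : (V -> Cplx) -> Prop) (q : (V -> Cplx) -> (V -> Cplx) -> Cplx) : Prop :=
  forall u, D u -> im (q u u) = 0 /\ 0 <= re (q u u).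

Definition form_closed (D : (V -> Cplx) -> Prop) (q : (V -> Cplx) -> (V -> Cplx) -> Cplx) : Prop :=
  forall (u : nat -> V -> Cplx) (ul : V -> Cplx),
    (forall n, D (u n)) -> l2 ul ->
    Un_cv (fun n => l2norm (fsub (u n) ul)) 0 ->
    (forall eps, 0 < eps -> exists N, forall n k, (N <= n)%nat -> (N <= k)%nat ->
        re (q (fsub (u n) (u k)) (fsub (u n) (u k))) < eps) ->
    D ul /\ Un_cv (fun n => re (q (fsub (u n) ul) (fsub (u n) ul))) 0.
End L2.

Section Graph.
Variable V : Type.
Variable m : V -> R.
Variable b : V -> V -> R.
Variable c : V -> R.

Definition is_graph : Prop :=
  (forall x, 0 <= c x) /\ (forall x y, 0 <= b x y) /\ (forall x, b x x = 0) /\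
  (forall x y, b x y = b y x) /\ (forall x, abs_summable (fun y => RtoC (b x y))).

Definition Cc (u : V -> Cplx) : Prop :=
  exists F : list V, forall x, u x <> C0 -> In x F.

Definition Ftilde (u : V -> Cplx) : Prop :=
  forall x, abs_summable (fun y => Cmul (RtoC (b x y)) (u y)).

Definition Ltilde (u : V -> Cplx) : V -> Cplx := fun x =>
  Cadd (Cmul (RtoC (/ m x)) (csum (fun y => Cmul (RtoC (b x y)) (Csub (u x) (u y)))))
       (Cmul (RtoC (c x / m x)) (u x)).

Definition FC : Prop := forall v, Cc v -> l2 m (Ltilde v).

Definition condC (D : (V -> Cplx) -> Prop) (q : (V -> Cplx) -> (V -> Cplx) -> Cplx) : Prop :=
  (form_nonneg D q /\ form_closed m D q) /\
  (forall v, Cc v -> D v) /\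
  (forall u v, D u -> Cc v ->
     abs_summable (fun x => Cmul (Cmul (u x) (Cconj (Ltilde v x))) (RtoC (m x))) /\
     csum (fun x => Cmul (Cmul (u x) (Cconj (Ltilde v x))) (RtoC (m x))) = q u v).

Definition restriction (DL : (V -> Cplx) -> Prop) (L : (V -> Cplx) -> (V -> Cplx)) : Prop :=
  forall u, DL u -> Ftilde u /\ L u = Ltilde u.
End Graph.

(* Main.v *)
Require Import Defs.
From Stdlib Require Import Reals List Permutation ClassicalEpsilon Classical FunctionalExtensionality Lra.
Open Scope R_scope.

Lemma Ceq : forall z w, re z = re w -> im z = im w -> z = w.
Proof. intros [a b] [c d]; simpl; intros; subst; reflexivity. Qed.

Ltac ceq := apply Ceq; simpl; try ring.

Lemma Cnorm_ge0 z : 0 <= Cnorm z.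
Proof. apply sqrt_pos. Qed.

Lemma Cnorm_sq z : Cnorm z * Cnorm z = re z * re z + im z * im z.
Proof. unfold Cnorm. apply sqrt_sqrt. nra. Qed.

Lemma Cnorm_le_of_sq z r : 0 <= r -> re z * re z + im z * im z <= r * r -> Cnorm z <= r.
Proof. intros. unfold Cnorm. rewrite <- (sqrt_square r) by auto. apply sqrt_le_1_alt; auto. Qed.

Lemma sq_le_Cnorm z r : 0 <= r -> r * r <= re z * re z + im z * im z -> r <= Cnorm z.
Proof. intros. pose proof (Cnorm_sq z). pose proof (Cnorm_ge0 z). nra. Qed.

Lemma Rabs_re_le z : Rabs (re z) <= Cnorm z.
Proof. apply sq_le_Cnorm. apply Rabs_pos. rewrite <- Rabs_mult, Rabs_right by nra. nra. Qed.

Lemma Rabs_im_le z : Rabs (im z) <= Cnorm z.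
Proof. apply sq_le_Cnorm. apply Rabs_pos. rewrite <- Rabs_mult, Rabs_right by nra. nra. Qed.

Lemma Cnorm_le_sum z : Cnorm z <= Rabs (re z) + Rabs (im z).
Proof.
  apply Cnorm_le_of_sq. pose proof (Rabs_pos (re z)); pose proof (Rabs_pos (im z)); lra.
  pose proof (Rabs_pos (re z)); pose proof (Rabs_pos (im z)).
  assert (re z * re z = Rabs (re z) * Rabs (re z)) by (rewrite <- Rabs_mult, Rabs_right; nra).
  assert (im z * im z = Rabs (im z) * Rabs (im z)) by (rewrite <- Rabs_mult, Rabs_right; nra).
  nra.
Qed.

Lemma Cnorm_mul z w : Cnorm (Cmul z w) = Cnorm z * Cnorm w.
Proof.
  unfold Cnorm. rewrite <- sqrt_mult by nra. f_equal. simpl. ring.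
Qed.

Lemma Cnorm_RtoC r : Cnorm (RtoC r) = Rabs r.
Proof. unfold Cnorm; simpl. rewrite <- sqrt_Rsqr_abs. f_equal. unfold Rsqr. ring. Qed.

Lemma Cnorm_conj z : Cnorm (Cconj z) = Cnorm z.
Proof. unfold Cnorm; simpl. f_equal. ring. Qed.

Lemma Cnorm_opp z : Cnorm (Copp z) = Cnorm z.
Proof. unfold Cnorm; simpl. f_equal. ring. Qed.

Lemma Cnorm_C0 : Cnorm C0 = 0.
Proof. unfold Cnorm; simpl. replace (0*0+0*0) with 0 by ring. apply sqrt_0. Qed.

Lemma Cnorm_triangle z w : Cnorm (Cadd z w) <= Cnorm z + Cnorm w.
Proof.
  apply Cnorm_le_of_sq. pose proof (Cnorm_ge0 z); pose proof (Cnorm_ge0 w); lra.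
  simpl. pose proof (Cnorm_sq z); pose proof (Cnorm_sq w).
  pose proof (Cnorm_ge0 z); pose proof (Cnorm_ge0 w).
  assert (re z * re w + im z * im w <= Cnorm z * Cnorm w).
  { apply Rsqr_incr_0_var. unfold Rsqr.
    replace (Cnorm z * Cnorm w * (Cnorm z * Cnorm w)) with ((Cnorm z * Cnorm z) * (Cnorm w * Cnorm w)) by ring.
    rewrite H, H0. pose proof (pow2_ge_0 (re z * im w - im z * re w)). nra. nra. }
  replace ((Cnorm z + Cnorm w) * (Cnorm z + Cnorm w)) with (Cnorm z * Cnorm z + Cnorm w * Cnorm w + 2 * (Cnorm z * Cnorm w)) by ring.
  rewrite H, H0. nra.
Qed.

Lemma Cnorm_sub_sym z w : Cnorm (Csub z w) = Cnorm (Csub w z).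
Proof. unfold Cnorm; simpl. f_equal. ring. Qed.

Lemma Cnorm_zconj z : Cnorm (Cmul z (Cconj z)) = Cnorm z * Cnorm z.
Proof. rewrite Cnorm_mul, Cnorm_conj; auto. Qed.

Section Lists.
Variable V : Type.

Definition Vdec (x y : V) : {x = y} + {x <> y} := excluded_middle_informative (x = y).

Lemma fsumR_app (F G : list V) f : fsumR (F ++ G) f = fsumR F f + fsumR G f.
Proof. induction F; simpl; unfold fsumR in *; simpl; [ring| rewrite IHF; ring]. Qed.

Lemma fsumR_cons x (F : list V) f : fsumR (x :: F) f = f x + fsumR F f.
Proof. reflexivity. Qed.

Lemma fsumR_nil f : fsumR (@nil V) f = 0.
Proof. reflexivity. Qed.

Lemma fsumR_perm (F G : list V) f : Permutation F G -> fsumR F f = fsumR G f.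
Proof.
  induction 1; rewrite ?fsumR_cons; auto.
  - rewrite IHPermutation; auto.
  - ring.
  - congruence.
Qed.

Lemma fsumR_ext (F : list V) f g : (forall x, In x F -> f x = g x) -> fsumR F f = fsumR F g.
Proof.
  induction F; intros H; rewrite ?fsumR_cons; auto.
  rewrite H, IHF; simpl; auto. intros; apply H; simpl; auto.
Qed.

Lemma fsumR_plus (F : list V) f g : fsumR F (fun x => f x + g x) = fsumR F f + fsumR F g.
Proof. induction F; rewrite ?fsumR_cons, ?fsumR_nil; [ring| rewrite IHF; ring]. Qed.

Lemma fsumR_scal (F : list V) a f : fsumR F (fun x => a * f x) = a * fsumR F f.
Proof. induction F; rewrite ?fsumR_cons, ?fsumR_nil; [ring| rewrite IHF; ring]. Qed.

Lemma fsumR_zero (F : list V) f : (forall x, In x F -> f x = 0) -> fsumR F f = 0.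
Proof. intros H; rewrite (fsumR_ext F f (fun _ => 0)) by auto.
  induction F; rewrite ?fsumR_cons, ?fsumR_nil; auto. rewrite IHF; [ring|]. intros; apply H; simpl; auto. Qed.

Lemma fsumR_le (F : list V) f g : (forall x, In x F -> f x <= g x) -> fsumR F f <= fsumR F g.
Proof. induction F; intros H; rewrite ?fsumR_cons, ?fsumR_nil; [lra|].
  pose proof (H a (or_introl eq_refl)). pose proof (IHF (fun x h => H x (or_intror h))). lra. Qed.

Lemma fsumR_nonneg (F : list V) f : (forall x, In x F -> 0 <= f x) -> 0 <= fsumR F f.
Proof. intros H. replace 0 with (fsumR F (fun _ => 0)). apply fsumR_le; auto.
  apply fsumR_zero; auto. Qed.

Lemma fsumR_abs (F : list V) f : Rabs (fsumR F f) <= fsumR F (fun x => Rabs (f x)).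
Proof. induction F; rewrite ?fsumR_cons, ?fsumR_nil. rewrite Rabs_R0; lra.
  pose proof (Rabs_triang (f a) (fsumR F f)). lra. Qed.

Lemma fsumC_cons x (F : list V) f : fsumC (x :: F) f = Cadd (f x) (fsumC F f).
Proof. reflexivity. Qed.

Lemma re_fsumC (F : list V) f : re (fsumC F f) = fsumR F (fun x => re (f x)).
Proof. induction F; [reflexivity|]. rewrite fsumC_cons, fsumR_cons; simpl. rewrite IHF; auto. Qed.

Lemma im_fsumC (F : list V) f : im (fsumC F f) = fsumR F (fun x => im (f x)).
Proof. induction F; [reflexivity|]. rewrite fsumC_cons, fsumR_cons; simpl. rewrite IHF; auto. Qed.

Lemma Cnorm_fsumC (F : list V) f : Cnorm (fsumC F f) <= fsumR F (fun x => Cnorm (f x)).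
Proof. induction F. unfold fsumC; simpl. rewrite Cnorm_C0, fsumR_nil; lra.
  rewrite fsumC_cons, fsumR_cons. pose proof (Cnorm_triangle (f a) (fsumC F f)). lra. Qed.

Lemma fsumC_ext (F : list V) f g : (forall x, In x F -> f x = g x) -> fsumC F f = fsumC F g.
Proof. intros H; apply Ceq; rewrite ?re_fsumC, ?im_fsumC; apply fsumR_ext; intros; rewrite H; auto. Qed.

Lemma union_list (F1 F2 : list V) : exists F, NoDup F /\ incl F1 F /\ incl F2 F.
Proof.
  exists (nodup Vdec (F1 ++ F2)). split. apply NoDup_nodup.
  split; intros x Hx; apply nodup_In; apply in_or_app; auto.
Qed.

Lemma nodup_list (F1 : list V) : exists F, NoDup F /\ forall x, In x F <-> In x F1.
Proof. exists (nodup Vdec F1). split. apply NoDup_nodup. intros; apply nodup_In. Qed.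

Definition inb (F : list V) (x : V) : bool :=
  if excluded_middle_informative (In x F) then true else false.

Lemma split_incl (F G : list V) : NoDup F -> NoDup G -> incl F G ->
  exists H, NoDup H /\ Permutation G (F ++ H) /\ (forall x, In x H -> ~ In x F).
Proof.
  intros HF HG HI. exists (filter (fun x => negb (inb F x)) G).
  assert (Hm : forall x, In x (filter (fun x => negb (inb F x)) G) <-> In x G /\ ~ In x F).
  { intros x. rewrite filter_In. unfold inb. destruct (excluded_middle_informative (In x F)); simpl; intuition; discriminate. }
  split; [apply NoDup_filter; auto|]. split.
  - apply NoDup_Permutation; auto.
    + apply NoDup_app; auto. apply NoDup_filter; auto. intros x H1 H2. apply Hm in H2; tauto.
    + intros x; rewrite in_app_iff, Hm. split. intros H; destruct (classic (In x F)); tauto.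
      intros [H|[H _]]; auto.
  - intros x H; apply Hm in H; tauto.
Qed.

Lemma fsumR_split (F G : list V) f : NoDup F -> NoDup G -> incl F G ->
  exists H, NoDup H /\ (forall x, In x H -> ~ In x F) /\ (forall x, In x H -> In x G) /\
    fsumR G f = fsumR F f + fsumR H f.
Proof.
  intros HF HG HI. destruct (split_incl F G HF HG HI) as [H [H1 [H2 H3]]].
  exists H. split; auto. split; auto. split.
  intros x Hx. apply (Permutation_in x (Permutation_sym H2)). apply in_or_app; auto.
  rewrite (fsumR_perm _ _ f H2), fsumR_app. auto.
Qed.

Lemma fsumR_mono (F G : list V) f : NoDup F -> NoDup G -> incl F G -> (forall x, 0 <= f x) ->
  fsumR F f <= fsumR G f.
Proof. intros HF HG HI Hp. destruct (fsumR_split F G f HF HG HI) as [H [_ [_ [_ E]]]].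
  rewrite E. pose proof (fsumR_nonneg H f (fun x _ => Hp x)). lra. Qed.

End Lists.

Section Nets.
Variable V : Type.

Definition hasR (f : V -> R) (s : R) : Prop :=
  forall eps, 0 < eps -> exists F0 : list V, NoDup F0 /\
    forall F : list V, NoDup F -> incl F0 F -> Rabs (fsumR F f - s) < eps.

Lemma hasR_unique f s t : hasR f s -> hasR f t -> s = t.
Proof.
  intros Hs Ht. apply NNPP; intro Hne.
  assert (He : 0 < Rabs (s - t) / 2) by (assert (s - t <> 0) by lra; pose proof (Rabs_pos_lt _ H); lra).
  destruct (Hs _ He) as [F1 [N1 H1]]; destruct (Ht _ He) as [F2 [N2 H2]].
  destruct (union_list V F1 F2) as [F [NF [I1 I2]]].
  specialize (H1 F NF I1); specialize (H2 F NF I2).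
  pose proof (Rabs_triang (s - fsumR F f) (fsumR F f - t)).
  replace (s - fsumR F f + (fsumR F f - t)) with (s - t) in H by ring.
  rewrite Rabs_minus_sym in H1. lra.
Qed.

Lemma hasR_lin f g s t a b' : hasR f s -> hasR g t ->
  hasR (fun x => a * f x + b' * g x) (a * s + b' * t).
Proof.
  intros Hs Ht eps He.
  set (K := Rabs a + Rabs b' + 1).
  assert (HK : 0 < K) by (unfold K; pose proof (Rabs_pos a); pose proof (Rabs_pos b'); lra).
  assert (He' : 0 < eps / K) by (apply Rdiv_lt_0_compat; auto).
  destruct (Hs _ He') as [F1 [N1 H1]]; destruct (Ht _ He') as [F2 [N2 H2]].
  destruct (union_list V F1 F2) as [F0 [NF [I1 I2]]].
  exists F0; split; auto. intros F NFF IF.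
  assert (IF1 : incl F1 F) by (intros x h; auto).
  assert (IF2 : incl F2 F) by (intros x h; auto).
  specialize (H1 F NFF IF1); specialize (H2 F NFF IF2).
  rewrite fsumR_plus, !fsumR_scal.
  replace (a * fsumR F f + b' * fsumR F g - (a * s + b' * t)) with
    (a * (fsumR F f - s) + b' * (fsumR F g - t)) by ring.
  eapply Rle_lt_trans. apply Rabs_triang. rewrite !Rabs_mult.
  assert (Rabs a * Rabs (fsumR F f - s) <= Rabs a * (eps / K)) by (apply Rmult_le_compat_l; [apply Rabs_pos|lra]).
  assert (Rabs b' * Rabs (fsumR F g - t) <= Rabs b' * (eps / K)) by (apply Rmult_le_compat_l; [apply Rabs_pos|lra]).
  assert ((Rabs a + Rabs b') * (eps / K) < eps).
  { assert (HH: (Rabs a + Rabs b') * (eps/K) < K * (eps/K)) by (apply Rmult_lt_compat_r; [auto| unfold K; lra]).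
    replace (K * (eps/K)) with eps in HH by (field; lra). auto. }
  lra.
Qed.

Lemma hasR_ext f g s : (forall x, f x = g x) -> hasR f s -> hasR g s.
Proof. intros H; replace g with f; auto. apply functional_extensionality; auto. Qed.

Lemma hasR_finite (F : list V) f : NoDup F -> (forall x, ~ In x F -> f x = 0) -> hasR f (fsumR F f).
Proof.
  intros NF Hz eps He. exists F; split; auto. intros G NG IG.
  destruct (fsumR_split V F G f NF NG IG) as [H [NH [H1 [_ E]]]].
  rewrite E, (fsumR_zero V H f) by (intros; apply Hz; auto).
  replace (fsumR F f + 0 - fsumR F f) with 0 by ring. rewrite Rabs_R0; auto.
Qed.

Lemma hasR_nonneg_sup f M : (forall x, 0 <= f x) -> (forall F, NoDup F -> fsumR F f <= M) ->
  exists s, hasR f s /\ (forall F, NoDup F -> fsumR F f <= s).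
Proof.
  intros Hp HM.
  set (E := fun r => exists F, NoDup F /\ r = fsumR F f).
  assert (Hb : bound E) by (exists M; intros r [F [NF ->]]; auto).
  assert (Hn : exists r, E r) by (exists 0; exists nil; split; [constructor| reflexivity]).
  destruct (completeness E Hb Hn) as [s [Hub Hlub]].
  exists s. split.
  - intros eps He.
    assert (exists F0, NoDup F0 /\ s - eps < fsumR F0 f).
    { apply NNPP; intro Hc. assert (is_upper_bound E (s - eps)).
      { intros r [F [NF ->]]. apply Rnot_lt_le; intro; apply Hc; eauto. }
      specialize (Hlub _ H); lra. }
    destruct H as [F0 [N0 H0]]. exists F0; split; auto. intros F NF IF.
    pose proof (fsumR_mono V F0 F f N0 NF IF Hp).
    assert (fsumR F f <= s) by (apply Hub; exists F; auto).
    rewrite Rabs_left1 by lra. lra.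
  - intros F NF; apply Hub; exists F; auto.
Qed.

Definition absR (f : V -> R) := exists M, forall F, NoDup F -> fsumR F (fun x => Rabs (f x)) <= M.

Lemma absR_has f : absR f -> exists s, hasR f s.
Proof.
  intros [M HM].
  destruct (hasR_nonneg_sup (fun x => Rmax (f x) 0) M) as [s1 [H1 _]].
  { intros; apply Rmax_r. }
  { intros F NF. eapply Rle_trans; [|apply (HM F NF)]. apply fsumR_le. intros x _.
    unfold Rmax; destruct Rle_dec; [apply Rabs_pos| apply RRle_abs]. }
  destruct (hasR_nonneg_sup (fun x => Rmax (- f x) 0) M) as [s2 [H2 _]].
  { intros; apply Rmax_r. }
  { intros F NF. eapply Rle_trans; [|apply (HM F NF)]. apply fsumR_le. intros x _.
    unfold Rmax; destruct Rle_dec; [apply Rabs_pos| rewrite <- Rabs_Ropp; apply RRle_abs]. }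
  exists (1 * s1 + (-1) * s2). eapply hasR_ext; [|apply (hasR_lin _ _ _ _ 1 (-1) H1 H2)].
  intros x; simpl. unfold Rmax; repeat destruct Rle_dec; lra.
Qed.

Lemma hasR_le_bound f s M : hasR f s -> (forall F, NoDup F -> fsumR F f <= M) -> s <= M.
Proof.
  intros Hs HM. apply Rnot_lt_le; intro Hlt.
  destruct (Hs (s - M)) as [F [NF HF]]; [lra|].
  specialize (HF F NF (incl_refl F)). specialize (HM F NF).
  apply Rabs_def2 in HF. lra.
Qed.

Lemma hasR_ge_bound f s M : hasR f s -> (forall F, NoDup F -> M <= fsumR F f) -> M <= s.
Proof.
  intros Hs HM. apply Rnot_lt_le; intro Hlt.
  destruct (Hs (M - s)) as [F [NF HF]]; [lra|].
  specialize (HF F NF (incl_refl F)). specialize (HM F NF).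
  apply Rabs_def2 in HF. lra.
Qed.

Lemma hasR_zero s : hasR (fun _ => 0) s -> s = 0.
Proof. intros H. apply (hasR_unique (fun _ => 0)); auto.
  pose proof (hasR_finite nil (fun _ => 0) (NoDup_nil _) (fun _ _ => eq_refl)). exact H0. Qed.

End Nets.

Section CSums.
Variable V : Type.

Lemma hasR_nonneg_ge (f : V -> R) s F : (forall x, 0 <= f x) -> hasR V f s -> NoDup F -> fsumR F f <= s.
Proof.
  intros Hp Hs NF. apply Rnot_lt_le; intro Hlt.
  destruct (Hs (fsumR F f - s)) as [F0 [N0 H0]]; [lra|].
  destruct (union_list V F0 F) as [G [NG [I1 I2]]].
  specialize (H0 G NG I1). pose proof (fsumR_mono V F G f NF NG I2 Hp).
  apply Rabs_def2 in H0. lra.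
Qed.

Lemma hasR_eq (f g : V -> R) s t : hasR V f s -> (forall x, f x = g x) -> s = t -> hasR V g t.
Proof. intros H1 H2 H3; subst; eapply hasR_ext; eauto. Qed.

Lemma has_sum_iff (f : V -> Cplx) s :
  has_sum f s <-> hasR V (fun x => re (f x)) (re s) /\ hasR V (fun x => im (f x)) (im s).
Proof.
  split.
  - intros H; split; intros eps He; destruct (H eps He) as [F0 [N0 H0]]; exists F0; split; auto;
      intros F NF IF; specialize (H0 F NF IF).
    + eapply Rle_lt_trans; [|apply H0]. rewrite <- re_fsumC.
      replace (re (fsumC F f) - re s) with (re (Csub (fsumC F f) s)) by (simpl; ring). apply Rabs_re_le.
    + eapply Rle_lt_trans; [|apply H0]. rewrite <- im_fsumC.
      replace (im (fsumC F f) - im s) with (im (Csub (fsumC F f) s)) by (simpl; ring). apply Rabs_im_le.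
  - intros [H1 H2] eps He.
    destruct (H1 (eps/2)) as [F1 [N1 E1]]; [lra|]. destruct (H2 (eps/2)) as [F2 [N2 E2]]; [lra|].
    destruct (union_list V F1 F2) as [F0 [N0 [I1 I2]]]. exists F0; split; auto.
    intros F NF IF. eapply Rle_lt_trans. apply Cnorm_le_sum.
    assert (A1 : incl F1 F) by (intros x h; auto). assert (A2 : incl F2 F) by (intros x h; auto).
    specialize (E1 F NF A1); specialize (E2 F NF A2).
    simpl. rewrite re_fsumC, im_fsumC. unfold Rminus in *. lra.
Qed.

Lemma has_sum_unique (f : V -> Cplx) s t : has_sum f s -> has_sum f t -> s = t.
Proof.
  intros Hs Ht. apply has_sum_iff in Hs; apply has_sum_iff in Ht.
  apply Ceq; [eapply hasR_unique; [apply Hs|apply Ht]|eapply hasR_unique; [apply Hs|apply Ht]].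
Qed.

Lemma csum_spec (f : V -> Cplx) s : has_sum f s -> csum f = s.
Proof.
  intros H. unfold csum. apply (has_sum_unique f). apply epsilon_spec. eauto. auto.
Qed.

Lemma abs_has (f : V -> Cplx) : abs_summable f -> exists s, has_sum f s.
Proof.
  intros [M HM].
  assert (A1 : absR V (fun x => re (f x))).
  { exists M. intros F NF. eapply Rle_trans; [|apply (HM F NF)]. apply fsumR_le; intros; apply Rabs_re_le. }
  assert (A2 : absR V (fun x => im (f x))).
  { exists M. intros F NF. eapply Rle_trans; [|apply (HM F NF)]. apply fsumR_le; intros; apply Rabs_im_le. }
  destruct (absR_has V _ A1) as [s1 H1]. destruct (absR_has V _ A2) as [s2 H2].
  exists (mkC s1 s2). apply has_sum_iff; simpl; auto.
Qed.

Lemma abs_csum (f : V -> Cplx) : abs_summable f -> has_sum f (csum f).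
Proof. intros H. destruct (abs_has f H) as [s Hs]. rewrite (csum_spec f s Hs). auto. Qed.

Lemma has_sum_ext (f g : V -> Cplx) s : (forall x, f x = g x) -> has_sum f s -> has_sum g s.
Proof. intros H; replace g with f; auto. apply functional_extensionality; auto. Qed.

Lemma has_sum_add (f g : V -> Cplx) s t : has_sum f s -> has_sum g t ->
  has_sum (fun x => Cadd (f x) (g x)) (Cadd s t).
Proof.
  intros Hs Ht. apply has_sum_iff in Hs; apply has_sum_iff in Ht. apply has_sum_iff; simpl; split.
  - eapply hasR_eq; [apply (hasR_lin V _ _ _ _ 1 1 (proj1 Hs) (proj1 Ht))|intros; simpl; ring|simpl; ring].
  - eapply hasR_eq; [apply (hasR_lin V _ _ _ _ 1 1 (proj2 Hs) (proj2 Ht))|intros; simpl; ring|simpl; ring].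
Qed.

Lemma has_sum_scal (f : V -> Cplx) s a : has_sum f s -> has_sum (fun x => Cmul a (f x)) (Cmul a s).
Proof.
  intros Hs. apply has_sum_iff in Hs. apply has_sum_iff; simpl; split.
  - eapply hasR_eq; [apply (hasR_lin V _ _ _ _ (re a) (- im a) (proj1 Hs) (proj2 Hs))|intros; simpl; ring|simpl; ring].
  - eapply hasR_eq; [apply (hasR_lin V _ _ _ _ (re a) (im a) (proj2 Hs) (proj1 Hs))|intros; simpl; ring|simpl; ring].
Qed.

Lemma has_sum_opp (f : V -> Cplx) s : has_sum f s -> has_sum (fun x => Copp (f x)) (Copp s).
Proof.
  intros H. replace (Copp s) with (Cmul (RtoC (-1)) s) by ceq.
  eapply has_sum_ext; [|apply has_sum_scal; eauto]. intros; ceq.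
Qed.

Lemma has_sum_sub (f g : V -> Cplx) s t : has_sum f s -> has_sum g t ->
  has_sum (fun x => Csub (f x) (g x)) (Csub s t).
Proof. intros; apply has_sum_add; auto; apply has_sum_opp; auto. Qed.

Lemma has_sum_conj (f : V -> Cplx) s : has_sum f s -> has_sum (fun x => Cconj (f x)) (Cconj s).
Proof.
  intros Hs. apply has_sum_iff in Hs. apply has_sum_iff; simpl; split. apply Hs.
  eapply hasR_eq; [apply (hasR_lin V _ _ _ _ 0 (- 1) (proj1 Hs) (proj2 Hs))|intros; simpl; ring|simpl; ring].
Qed.

Lemma has_sum_finite (F : list V) (f : V -> Cplx) : NoDup F -> (forall x, ~ In x F -> f x = C0) ->
  has_sum f (fsumC F f).
Proof.
  intros NF Hz. apply has_sum_iff. rewrite re_fsumC, im_fsumC. split; apply hasR_finite; auto;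
  intros x Hx; rewrite (Hz x Hx); reflexivity.
Qed.

Lemma has_sum_single (f : V -> Cplx) x : (forall y, y <> x -> f y = C0) -> has_sum f (f x).
Proof.
  intros H. replace (f x) with (fsumC (x :: nil) f) by (ceq; ring).
  apply has_sum_finite. constructor; [simpl; tauto| constructor].
  intros y Hy. apply H. intro; subst; apply Hy; simpl; auto.
Qed.

Lemma has_sum_zero : has_sum (fun _ : V => C0) C0.
Proof. exact (has_sum_finite nil (fun _ => C0) (NoDup_nil _) (fun _ _ => eq_refl)). Qed.

Lemma has_sum_fsum {W : Type} (G : list W) (f : W -> V -> Cplx) (s : W -> Cplx) :
  (forall y, In y G -> has_sum (f y) (s y)) ->
  has_sum (fun z => fsumC G (fun y => f y z)) (fsumC G s).
Proof.
  induction G; intros H.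
  - apply has_sum_zero.
  - simpl. apply (has_sum_add (f a) (fun z => fold_right Cadd C0 (map (fun y => f y z) G))).
    apply H; simpl; auto. apply IHG. intros; apply H; simpl; auto.
Qed.

Lemma has_sum_norm_bound (f : V -> Cplx) s M : has_sum f s ->
  (forall F, NoDup F -> fsumR F (fun x => Cnorm (f x)) <= M) -> Cnorm s <= M.
Proof.
  intros Hs HM. apply Rnot_lt_le; intro Hlt.
  destruct (Hs (Cnorm s - M)) as [F [NF HF]]; [lra|].
  specialize (HF F NF (incl_refl F)). specialize (HM F NF).
  pose proof (Cnorm_fsumC V F f).
  pose proof (Cnorm_triangle (Csub s (fsumC F f)) (fsumC F f)).
  replace (Cadd (Csub s (fsumC F f)) (fsumC F f)) with s in H0 by ceq.
  rewrite Cnorm_sub_sym in H0. lra.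
Qed.

Lemma has_sum_real (f : V -> Cplx) s : has_sum f s -> (forall x, im (f x) = 0) -> im s = 0.
Proof.
  intros H Hi. apply has_sum_iff in H. apply (hasR_zero V). eapply hasR_ext; [|apply H]. auto.
Qed.

Lemma has_sum_re_nonneg (f : V -> Cplx) s : has_sum f s -> (forall x, 0 <= re (f x)) -> 0 <= re s.
Proof.
  intros H Hp. apply has_sum_iff in H. apply (hasR_ge_bound V _ _ 0 (proj1 H)).
  intros; apply fsumR_nonneg; auto.
Qed.

Lemma abs_le (f g : V -> Cplx) K : (forall x, Cnorm (f x) <= K * Cnorm (g x)) -> abs_summable g -> abs_summable f.
Proof.
  intros H [M HM]. exists (Rabs K * M). intros F NF.
  eapply Rle_trans. apply (fsumR_le V F _ (fun x => Rabs K * Cnorm (g x))).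
  intros; eapply Rle_trans; [apply H|]. apply Rmult_le_compat_r. apply Cnorm_ge0. apply RRle_abs.
  rewrite fsumR_scal. apply Rmult_le_compat_l. apply Rabs_pos. auto.
Qed.

Lemma abs_add (f g : V -> Cplx) : abs_summable f -> abs_summable g ->
  abs_summable (fun x => Cadd (f x) (g x)).
Proof.
  intros [M1 H1] [M2 H2]. exists (M1 + M2). intros F NF.
  eapply Rle_trans. apply (fsumR_le V F _ (fun x => Cnorm (f x) + Cnorm (g x))).
  intros; apply Cnorm_triangle. rewrite fsumR_plus. specialize (H1 F NF); specialize (H2 F NF); lra.
Qed.

Lemma abs_le2 (f g h : V -> Cplx) : (forall x, Cnorm (f x) <= Cnorm (g x) + Cnorm (h x)) ->
  abs_summable g -> abs_summable h -> abs_summable f.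
Proof.
  intros H Hg Hh. apply (abs_le f (fun x => Cadd (mkC (Cnorm (g x)) 0) (mkC (Cnorm (h x)) 0)) 1).
  intros x. rewrite Rmult_1_l. eapply Rle_trans; [apply H|]. simpl.
  apply sq_le_Cnorm. pose proof (Cnorm_ge0 (g x)); pose proof (Cnorm_ge0 (h x)); lra. simpl; nra.
  apply abs_add; [apply (abs_le _ g 1)|apply (abs_le _ h 1)]; auto; intros x;
    rewrite Rmult_1_l; (apply Cnorm_le_of_sq; [apply Cnorm_ge0| simpl; nra]).
Qed.

Lemma abs_finite (f : V -> Cplx) (F : list V) : (forall x, f x <> C0 -> In x F) -> abs_summable f.
Proof.
  intros H. exists (fsumR F (fun x => Cnorm (f x))). intros G NG.
  destruct (nodup_list V F) as [F' [NF' EF']].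
  destruct (union_list V G F') as [U [NU [I1 I2]]].
  apply Rle_trans with (fsumR U (fun x => Cnorm (f x))).
  apply fsumR_mono; auto. intros; apply Cnorm_ge0.
  destruct (fsumR_split V F' U (fun x => Cnorm (f x)) NF' NU I2) as [Hh [NH [H1 [H2 E]]]].
  rewrite E. rewrite (fsumR_zero V Hh).
  2:{ intros x Hx. destruct (classic (f x = C0)) as [e|e]. rewrite e; apply Cnorm_C0.
      exfalso. apply (H1 x Hx). apply EF'. auto. }
  rewrite Rplus_0_r.
  clear - NF' EF'. revert F' NF' EF'. induction F; intros F' NF' EF'.
  - destruct F' as [|y F']. apply Rle_refl. exfalso. apply (EF' y). simpl; auto.
  - destruct (classic (In a F)) as [Ha|Ha].
    + eapply Rle_trans. apply IHF; auto. intros x; rewrite EF'; simpl; intuition congruence.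
      rewrite fsumR_cons. pose proof (Cnorm_ge0 (f a)). lra.
    + assert (Ia : In a F') by (apply EF'; simpl; auto).
      destruct (in_split a F') as [l1 [l2 E]]; auto. subst F'.
      rewrite (fsumR_perm V _ (a :: l1 ++ l2)) by (apply Permutation_sym, Permutation_middle).
      rewrite !fsumR_cons. apply Rplus_le_compat_l. apply IHF.
      apply NoDup_remove_1 in NF'; auto.
      intros x. split.
      * intros Hx. assert (In x (l1 ++ a :: l2)) by (apply in_app_or in Hx; apply in_or_app; simpl; tauto).
        apply EF' in H. destruct H; auto. subst x. exfalso. apply NoDup_remove_2 in NF'; auto.
      * intros Hx. assert (In x (a :: F)) by (simpl; auto). apply EF' in H.
        apply in_app_or in H; apply in_or_app; simpl in H; destruct H as [H|[H|H]]; auto. subst; tauto.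
Qed.

End CSums.

Section L2facts.
Variable V : Type.
Variable m : V -> R.
Hypothesis Hm : forall x, 0 < m x.

Definition isum (u v : V -> Cplx) (x : V) : Cplx := Cmul (Cmul (u x) (Cconj (v x))) (RtoC (m x)).
Definition sq (u : V -> Cplx) (x : V) : R := m x * (Cnorm (u x) * Cnorm (u x)).
Definition N2 (u : V -> Cplx) : R := re (inner m u u).

Lemma sq_nonneg u x : 0 <= sq u x.
Proof. unfold sq. pose proof (Hm x); pose proof (Cnorm_ge0 (u x)). apply Rmult_le_pos; nra. Qed.

Lemma Cnorm_l2s u x : Cnorm (Cmul (RtoC (m x)) (Cmul (u x) (Cconj (u x)))) = sq u x.
Proof. rewrite Cnorm_mul, Cnorm_zconj, Cnorm_RtoC, Rabs_right; auto. pose proof (Hm x); lra. Qed.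

Lemma Cnorm_isum u v x : Cnorm (isum u v x) = Cnorm (u x) * Cnorm (v x) * m x.
Proof. unfold isum. rewrite !Cnorm_mul, Cnorm_conj, Cnorm_RtoC, (Rabs_right (m x)); auto. pose proof (Hm x); lra. Qed.

Lemma l2_iff u : l2 m u <-> exists M, forall F, NoDup F -> fsumR F (sq u) <= M.
Proof.
  unfold l2, abs_summable. split; intros [M H]; exists M; intros F NF; specialize (H F NF);
  (erewrite fsumR_ext; [apply H|]); intros; simpl; rewrite Cnorm_l2s; auto.
Qed.

Lemma isum_uu u x : isum u u x = RtoC (sq u x).
Proof. unfold isum, sq. rewrite Cnorm_sq. ceq. Qed.

Lemma isum_bound u v x t : 0 < t -> Cnorm (isum u v x) <= t * sq u x + / t * sq v x.
Proof.
  intros Ht. rewrite Cnorm_isum. unfold sq. pose proof (Hm x).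
  pose proof (Cnorm_ge0 (u x)); pose proof (Cnorm_ge0 (v x)).
  set (a := Cnorm (u x)) in *; set (b' := Cnorm (v x)) in *.
  assert (a * b' <= t * (a * a) + / t * (b' * b')).
  { assert (0 < / t) by (apply Rinv_0_lt_compat; auto).
    assert (t * / t = 1) by (field; lra).
    pose proof (pow2_ge_0 (t * a - b')).
    assert (2 * t * (a * b') <= t * t * (a * a) + b' * b') by nra.
    assert (/ t * (2 * t * (a * b')) <= / t * (t * t * (a * a) + b' * b')) by (apply Rmult_le_compat_l; lra).
    replace (/ t * (2 * t * (a * b'))) with (2 * (a * b')) in H5 by (field; lra).
    replace (/ t * (t * t * (a * a) + b' * b')) with (t * (a * a) + / t * (b' * b')) in H5 by (field; lra).
    nra. }
  nra.
Qed.

Lemma isum_abs u v : l2 m u -> l2 m v -> abs_summable (isum u v).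
Proof.
  intros Hu Hv. apply l2_iff in Hu; apply l2_iff in Hv. destruct Hu as [M1 H1]; destruct Hv as [M2 H2].
  exists (1 * M1 + / 1 * M2). intros F NF.
  eapply Rle_trans. apply (fsumR_le V F _ (fun x => 1 * sq u x + / 1 * sq v x)).
  intros; apply isum_bound; lra.
  rewrite fsumR_plus, !fsumR_scal. specialize (H1 F NF); specialize (H2 F NF).
  rewrite Rinv_1; lra.
Qed.

Lemma inner_has u v : l2 m u -> l2 m v -> has_sum (isum u v) (inner m u v).
Proof. intros; apply abs_csum, isum_abs; auto. Qed.

Lemma inner_uu u : l2 m u -> has_sum (fun x => RtoC (sq u x)) (inner m u u).
Proof. intros H. eapply has_sum_ext; [|apply inner_has; auto]. intros; apply isum_uu. Qed.

Lemma inner_uu_im u : l2 m u -> im (inner m u u) = 0.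
Proof. intros H. eapply has_sum_real. apply inner_uu; auto. intros; reflexivity. Qed.

Lemma N2_nonneg u : l2 m u -> 0 <= N2 u.
Proof. intros H. eapply has_sum_re_nonneg. apply inner_uu; auto. intros; simpl; apply sq_nonneg. Qed.

Lemma hasR_sq u : l2 m u -> hasR V (sq u) (N2 u).
Proof. intros H. destruct (proj1 (has_sum_iff _ _ _) (inner_uu u H)). auto. Qed.

Lemma fsum_le_N2 u F : l2 m u -> NoDup F -> fsumR F (sq u) <= N2 u.
Proof. intros H NF. apply hasR_nonneg_ge; auto. apply sq_nonneg. apply hasR_sq; auto. Qed.

Lemma N2_le u M : l2 m u -> (forall F, NoDup F -> fsumR F (sq u) <= M) -> N2 u <= M.
Proof. intros H HM. eapply hasR_le_bound; eauto. apply hasR_sq; auto. Qed.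

Lemma inner_bound u v t : 0 < t -> l2 m u -> l2 m v -> Cnorm (inner m u v) <= t * N2 u + / t * N2 v.
Proof.
  intros Ht Hu Hv. apply (has_sum_norm_bound V (isum u v)). apply inner_has; auto.
  intros F NF. eapply Rle_trans. apply (fsumR_le V F _ (fun x => t * sq u x + / t * sq v x)).
  intros; apply isum_bound; auto.
  rewrite fsumR_plus, !fsumR_scal.
  pose proof (fsum_le_N2 u F Hu NF); pose proof (fsum_le_N2 v F Hv NF).
  assert (0 < / t) by (apply Rinv_0_lt_compat; auto). nra.
Qed.

Lemma sq_add_le u v x : sq (fadd u v) x <= 2 * sq u x + 2 * sq v x.
Proof.
  unfold sq, fadd. pose proof (Cnorm_triangle (u x) (v x)). pose proof (Hm x).
  pose proof (Cnorm_ge0 (u x)); pose proof (Cnorm_ge0 (v x)); pose proof (Cnorm_ge0 (Cadd (u x) (v x))).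
  assert (Cnorm (Cadd (u x) (v x)) * Cnorm (Cadd (u x) (v x)) <= 2 * (Cnorm (u x) * Cnorm (u x)) + 2 * (Cnorm (v x) * Cnorm (v x))).
  { pose proof (pow2_ge_0 (Cnorm (u x) - Cnorm (v x))). nra. }
  nra.
Qed.

Lemma l2_add u v : l2 m u -> l2 m v -> l2 m (fadd u v).
Proof.
  intros Hu Hv. apply l2_iff in Hu; apply l2_iff in Hv. destruct Hu as [M1 H1]; destruct Hv as [M2 H2].
  apply l2_iff. exists (2 * M1 + 2 * M2). intros F NF.
  eapply Rle_trans. apply (fsumR_le V F _ (fun x => 2 * sq u x + 2 * sq v x)).
  intros; apply sq_add_le. rewrite fsumR_plus, !fsumR_scal. specialize (H1 F NF); specialize (H2 F NF). lra.
Qed.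

Lemma l2_scale a u : l2 m u -> l2 m (fscale a u).
Proof.
  intros Hu. apply l2_iff in Hu. destruct Hu as [M1 H1]. apply l2_iff.
  exists (Cnorm a * Cnorm a * M1). intros F NF.
  erewrite fsumR_ext. rewrite fsumR_scal. apply Rmult_le_compat_l. pose proof (Cnorm_ge0 a); nra. apply H1; auto.
  intros x _. unfold sq, fscale. rewrite Cnorm_mul. ring.
Qed.

Lemma fsub_eq (u v : V -> Cplx) : fsub u v = fadd u (fscale (RtoC (-1)) v).
Proof. apply functional_extensionality; intros x. unfold fsub, fadd, fscale. ceq. Qed.

Lemma l2_sub u v : l2 m u -> l2 m v -> l2 m (fsub u v).
Proof. intros; rewrite fsub_eq; apply l2_add; auto; apply l2_scale; auto. Qed.

Lemma inner_sub_l u v w : l2 m u -> l2 m v -> l2 m w ->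
  inner m (fsub u v) w = Csub (inner m u w) (inner m v w).
Proof.
  intros Hu Hv Hw. apply csum_spec. eapply has_sum_ext; [|apply has_sum_sub; apply inner_has; eauto].
  intros x. unfold isum, fsub. ceq.
Qed.

Lemma inner_sub_r u v w : l2 m u -> l2 m v -> l2 m w ->
  inner m u (fsub v w) = Csub (inner m u v) (inner m u w).
Proof.
  intros Hu Hv Hw. apply csum_spec. eapply has_sum_ext; [|apply has_sum_sub; apply inner_has; eauto].
  intros x. unfold isum, fsub. ceq.
Qed.

Lemma Cc_l2 (v : V -> Cplx) : Cc v -> l2 m v.
Proof.
  intros [F HF]. apply (abs_finite V _ F). intros x Hx. apply HF. intro E; apply Hx. rewrite E. ceq.
Qed.

End L2facts.

Section GraphFacts.
Variable V : Type.
Variable m : V -> R.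
Variable b : V -> V -> R.
Variable c : V -> R.
Hypothesis Hm : forall x, 0 < m x.
Hypothesis Hg : is_graph b c.

Definition deg (x : V) : R := re (csum (fun y => RtoC (b x y))).

Lemma has_deg x : has_sum (fun y => RtoC (b x y)) (RtoC (deg x)).
Proof.
  destruct Hg as [_ [_ [_ [_ H]]]].
  pose proof (abs_csum V _ (H x)). unfold deg.
  replace (RtoC (re (csum (fun y => RtoC (b x y))))) with (csum (fun y => RtoC (b x y))); auto.
  apply Ceq; simpl; auto. eapply has_sum_real; eauto.
Qed.

Lemma Ltilde_formula u x T : has_sum (fun y => Cmul (RtoC (b x y)) (u y)) T ->
  Ltilde m b c u x = Cmul (RtoC (/ m x)) (Csub (Cmul (u x) (RtoC (deg x + c x))) T).
Proof.
  intros HT. unfold Ltilde.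
  rewrite (csum_spec V _ (Csub (Cmul (u x) (RtoC (deg x))) T)).
  ceq. unfold Rdiv; ring. unfold Rdiv; ring.
  eapply has_sum_ext; [|apply has_sum_sub; [apply has_sum_scal, has_deg| apply HT]].
  intros y; simpl. ceq.
Qed.

Lemma Cc_nodup (v : V -> Cplx) : Cc v -> exists F, NoDup F /\ forall x, ~ In x F -> v x = C0.
Proof.
  intros [F HF]. destruct (nodup_list V F) as [F' [N E]]. exists F'; split; auto.
  intros x Hx. apply NNPP; intro H. apply Hx, E, HF; auto.
Qed.

Lemma fsumC_sub (F : list V) f g : fsumC F (fun x => Csub (f x) (g x)) = Csub (fsumC F f) (fsumC F g).
Proof. induction F. ceq. rewrite !fsumC_cons, IHF. ceq. Qed.

Lemma fsumC_mul_conj (F : list V) a g : Cmul a (Cconj (fsumC F g)) = fsumC F (fun y => Cmul a (Cconj (g y))).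
Proof. induction F. ceq. rewrite !fsumC_cons, <- IHF. ceq. Qed.

Lemma Ltilde_Cc v x F : NoDup F -> (forall y, ~ In y F -> v y = C0) ->
  Ltilde m b c v x = Cmul (RtoC (/ m x)) (Csub (Cmul (v x) (RtoC (deg x + c x)))
     (fsumC F (fun y => Cmul (RtoC (b x y)) (v y)))).
Proof.
  intros NF HF. apply Ltilde_formula. apply has_sum_finite; auto.
  intros y Hy. rewrite HF; auto. ceq.
Qed.

Lemma Green u v : Ftilde b u -> Cc v ->
  inner m (Ltilde m b c u) v = inner m u (Ltilde m b c v).
Proof.
  intros Hu Hv. destruct (Cc_nodup v Hv) as [F [NF HF]].
  set (T := fun y => csum (fun z => Cmul (RtoC (b y z)) (u z))).
  assert (HT : forall y, has_sum (fun z => Cmul (RtoC (b y z)) (u z)) (T y)).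
  { intros y. apply abs_csum. apply Hu. }
  set (A := fsumC F (fun z => Cmul (Cmul (u z) (Cconj (v z))) (RtoC (deg z + c z)))).
  set (B := fsumC F (fun y => Cmul (Cconj (v y)) (T y))).
  assert (Hsym : forall x y, b x y = b y x) by apply Hg.
  transitivity (Csub A B).
  - unfold inner. rewrite (csum_spec V _ (fsumC F (isum V m (Ltilde m b c u) v))).
    2:{ apply has_sum_finite; auto. intros y Hy. unfold isum. rewrite HF; auto. ceq. }
    unfold A, B. rewrite <- fsumC_sub. apply fsumC_ext. intros y _. unfold isum.
    rewrite (Ltilde_formula u y (T y) (HT y)). pose proof (Hm y).
    apply Ceq; simpl; field; lra.
  - symmetry. unfold inner. apply csum_spec.
    eapply has_sum_ext; [|apply has_sum_sub;
      [apply (has_sum_finite V F (fun z => Cmul (Cmul (u z) (Cconj (v z))) (RtoC (deg z + c z)))); auto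
      |apply (has_sum_fsum V F (fun y z => Cmul (Cconj (v y)) (Cmul (RtoC (b y z)) (u z))) (fun y => Cmul (Cconj (v y)) (T y)))]].
    + intros z. symmetry. unfold isum. rewrite (Ltilde_Cc v z F NF HF). pose proof (Hm z).
      set (P := fsumC F (fun y => Cmul (RtoC (b z y)) (v y))).
      transitivity (Csub (Cmul (Cmul (u z) (Cconj (v z))) (RtoC (deg z + c z))) (Cmul (u z) (Cconj P))).
      apply Ceq; simpl; field; lra.
      f_equal. unfold P. rewrite fsumC_mul_conj. apply fsumC_ext. intros y _. rewrite (Hsym z y). ceq.
    + intros z Hz. rewrite HF; auto. ceq.
    + intros y _. apply has_sum_scal. apply HT.
Qed.

End GraphFacts.

Lemma CV_const a : Un_cv (fun _ : nat => a) a.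
Proof. intros eps He. exists 0%nat. intros. unfold R_dist. rewrite Rminus_diag, Rabs_R0; auto. Qed.

Lemma CV_le_bound (a : nat -> R) l M N : Un_cv a l -> (forall k, (k >= N)%nat -> a k <= M) -> l <= M.
Proof.
  intros Ha HM. apply Rnot_lt_le; intro H.
  destruct (Ha (l - M)) as [N1 H1]; [lra|].
  specialize (H1 (max N N1) (Nat.le_max_r _ _)). specialize (HM (max N N1) (Nat.le_max_l _ _)).
  unfold R_dist in H1. apply Rabs_def2 in H1. lra.
Qed.

Definition limR (u : nat -> R) : R := epsilon (inhabits 0) (fun l => Un_cv u l).

Lemma limR_spec u : Cauchy_crit u -> Un_cv u (limR u).
Proof. intros H. unfold limR. apply epsilon_spec. destruct (R_complete u H) as [l Hl]. eauto. Qed.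

Section Complete.
Variable V : Type.
Variable m : V -> R.
Hypothesis Hm : forall x, 0 < m x.

Lemma fsumR_cv (F : list V) (f : nat -> V -> R) (g : V -> R) :
  (forall x, Un_cv (fun k => f k x) (g x)) -> Un_cv (fun k => fsumR F (f k)) (fsumR F g).
Proof.
  induction F; intros H. exact (CV_const 0).
  simpl. apply (CV_plus (fun k => f k a) (fun k => fsumR F (f k))); auto.
Qed.

Lemma sq_single u x : l2 m u -> sq V m u x <= N2 V m u.
Proof.
  intros H. pose proof (fsum_le_N2 V m Hm u (x :: nil) H).
  assert (NoDup (x :: nil)) by (constructor; [simpl; tauto|constructor]).
  specialize (H0 H1). unfold fsumR in H0; simpl in H0. lra.
Qed.

Lemma l2_complete (w : nat -> V -> Cplx) : (forall n, l2 m (w n)) ->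
  (forall eps, 0 < eps -> exists N, forall n k, (N <= n)%nat -> (N <= k)%nat -> N2 V m (fsub (w n) (w k)) < eps) ->
  exists wl, l2 m wl /\ Un_cv (fun n => N2 V m (fsub (w n) wl)) 0.
Proof.
  intros Hl Hc.
  assert (Hpt : forall x eps, 0 < eps -> exists N, forall n k, (N <= n)%nat -> (N <= k)%nat ->
             Cnorm (Csub (w n x) (w k x)) < eps).
  { intros x eps He. destruct (Hc (eps * eps * m x)) as [N HN].
    pose proof (Hm x). apply Rmult_lt_0_compat; nra.
    exists N. intros n k Hn Hk. specialize (HN n k Hn Hk).
    pose proof (sq_single (fsub (w n) (w k)) x (l2_sub V m Hm _ _ (Hl n) (Hl k))).
    unfold sq in H. change (fsub (w n) (w k) x) with (Csub (w n x) (w k x)) in H. pose proof (Hm x). pose proof (Cnorm_ge0 (Csub (w n x) (w k x))).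
    set (d := Cnorm (Csub (w n x) (w k x))) in *.
    assert (d * d < eps * eps).
    { apply (Rmult_lt_reg_l (m x)); auto. assert (eps*eps*m x = m x * (eps*eps)) by ring. lra. }
    nra. }
  assert (Hre : forall x, Cauchy_crit (fun n => re (w n x))).
  { intros x eps He. destruct (Hpt x eps He) as [N HN]. exists N. intros n k Hn Hk.
    unfold R_dist. eapply Rle_lt_trans; [|apply (HN n k Hn Hk)].
    replace (re (w n x) - re (w k x)) with (re (Csub (w n x) (w k x))) by (simpl; ring). apply Rabs_re_le. }
  assert (Him : forall x, Cauchy_crit (fun n => im (w n x))).
  { intros x eps He. destruct (Hpt x eps He) as [N HN]. exists N. intros n k Hn Hk.
    unfold R_dist. eapply Rle_lt_trans; [|apply (HN n k Hn Hk)].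
    replace (im (w n x) - im (w k x)) with (im (Csub (w n x) (w k x))) by (simpl; ring). apply Rabs_im_le. }
  set (wl := fun x => mkC (limR (fun n => re (w n x))) (limR (fun n => im (w n x)))).
  assert (Hcv : forall n x, Un_cv (fun k => sq V m (fsub (w n) (w k)) x) (sq V m (fsub (w n) wl) x)).
  { intros n x. unfold sq, fsub.
    assert (E : forall z, Cnorm z * Cnorm z = re z * re z + im z * im z) by apply Cnorm_sq.
    apply (Un_cv_ext (fun k => m x * ((re (w n x) - re (w k x)) * (re (w n x) - re (w k x)) +
                                      (im (w n x) - im (w k x)) * (im (w n x) - im (w k x))))).
    intros k. rewrite E. simpl. ring.
    rewrite E. simpl.
    replace (re (w n x) + - limR (fun n0 => re (w n0 x))) with (re (w n x) - limR (fun n0 => re (w n0 x))) by ring.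
    replace (im (w n x) + - limR (fun n0 => im (w n0 x))) with (im (w n x) - limR (fun n0 => im (w n0 x))) by ring.
    apply CV_mult. apply CV_const.
    pose proof (CV_minus _ _ _ _ (CV_const (re (w n x))) (limR_spec _ (Hre x))).
    pose proof (CV_minus _ _ _ _ (CV_const (im (w n x))) (limR_spec _ (Him x))).
    apply CV_plus; apply CV_mult; auto. }
  assert (Hb : forall eps, 0 < eps -> exists N, forall n, (N <= n)%nat ->
             l2 m (fsub (w n) wl) /\ N2 V m (fsub (w n) wl) <= eps).
  { intros eps He. destruct (Hc eps He) as [N HN]. exists N. intros n Hn.
    assert (HF : forall F, NoDup F -> fsumR F (sq V m (fsub (w n) wl)) <= eps).
    { intros F NF. apply (CV_le_bound (fun k => fsumR F (sq V m (fsub (w n) (w k)))) _ eps N).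
      apply fsumR_cv. intros; apply Hcv.
      intros k Hk. specialize (HN n k Hn Hk).
      pose proof (fsum_le_N2 V m Hm (fsub (w n) (w k)) F (l2_sub V m Hm _ _ (Hl n) (Hl k)) NF). lra. }
    assert (l2 m (fsub (w n) wl)) by (apply l2_iff; eauto).
    split; auto. apply N2_le; auto. }
  exists wl. split.
  - destruct (Hb 1) as [N HN]; [lra|]. destruct (HN N (Nat.le_refl _)) as [H1 _].
    replace wl with (fsub (w N) (fsub (w N) wl)). apply l2_sub; auto.
    apply functional_extensionality; intros x; unfold fsub; ceq.
  - intros eps He. destruct (Hb (eps / 2)) as [N HN]; [lra|]. exists N. intros n Hn.
    destruct (HN n Hn) as [H1 H2]. pose proof (N2_nonneg V m Hm _ H1).
    unfold R_dist. rewrite Rminus_0_r, Rabs_right; lra.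
Qed.

End Complete.

Lemma Cnorm_zero a : Cnorm a = 0 -> a = C0.
Proof. intros H. pose proof (Cnorm_sq a). rewrite H in H0. apply Ceq; simpl; nra. Qed.

Section SA.
Variable V : Type.
Variable m : V -> R.
Hypothesis Hm : forall x, 0 < m x.
Variable DS : (V -> Cplx) -> Prop.
Variable S : (V -> Cplx) -> (V -> Cplx).
Hypothesis HS : selfadjoint m DS S.

Lemma S_l2 u : DS u -> l2 m u /\ l2 m (S u).
Proof. destruct HS as [[_ [H _]] _]. auto. Qed.

Lemma symS u w : DS u -> DS w -> inner m (S u) w = inner m u (S w).
Proof.
  intros Hu Hw. destruct HS as [_ [_ Hc]]. destruct (S_l2 w Hw) as [H1 H2].
  apply (proj2 (Hc w (S w) H1 H2)); auto.
Qed.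

Lemma S_sub u w : DS u -> DS w -> DS (fsub u w) /\ S (fsub u w) = fsub (S u) (S w).
Proof.
  intros Hu Hw. destruct HS as [[[_ [Hadd Hsc]] [_ [Sadd Ssc]]] _].
  rewrite !fsub_eq. split. apply Hadd; auto.
  rewrite Sadd, Ssc; auto.
Qed.

Lemma S_closed : form_closed m DS (fun u v => inner m (S u) (S v)).
Proof.
  intros u ul Hu Hul Hcv Hc.
  assert (HN2u : Un_cv (fun n => N2 V m (fsub (u n) ul)) 0).
  { apply (Un_cv_ext (fun n => l2norm m (fsub (u n) ul) * l2norm m (fsub (u n) ul))).
    intros n. unfold l2norm. apply sqrt_sqrt. apply N2_nonneg; auto. apply l2_sub; auto. apply S_l2; auto.
    replace 0 with (0 * 0) by ring. apply CV_mult; auto. }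
  set (w := fun n => S (u n)).
  assert (Hwl : forall n, l2 m (w n)) by (intros; apply S_l2; auto).
  destruct (l2_complete V m Hm w Hwl) as [wl [Hwll Hwcv]].
  { intros eps He. destruct (Hc eps He) as [N HN]. exists N. intros n k Hn Hk.
    specialize (HN n k Hn Hk). simpl in HN. destruct (S_sub (u n) (u k)) as [_ E]; auto.
    rewrite E in HN. exact HN. }
  assert (Hadj : forall z, DS z -> inner m (S z) ul = inner m z wl).
  { intros z Hz. destruct (S_l2 z Hz) as [Hz1 Hz2].
    set (a := Csub (inner m (S z) ul) (inner m z wl)).
    assert (Ha : forall n, a = Csub (inner m z (fsub (w n) wl)) (inner m (S z) (fsub (u n) ul))).
    { intros n. destruct (S_l2 (u n) (Hu n)) as [H1 H2].
      rewrite inner_sub_r, inner_sub_r; auto. unfold w. rewrite <- symS; auto. unfold a. ceq. }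
    assert (Cnorm a = 0).
    { apply NNPP; intro Hne. pose proof (Cnorm_ge0 a).
      set (A := Cnorm a) in *. assert (HA : 0 < A) by lra.
      pose proof (N2_nonneg V m Hm z Hz1). pose proof (N2_nonneg V m Hm (S z) Hz2).
      set (t := A / (4 * (N2 V m z + N2 V m (S z) + 1))).
      assert (Ht : 0 < t) by (unfold t; apply Rdiv_lt_0_compat; lra).
      assert (Ht2 : t * (N2 V m z + N2 V m (S z)) < A / 2).
      { unfold t. apply (Rmult_lt_reg_r (4 * (N2 V m z + N2 V m (S z) + 1))). lra.
        field_simplify; try lra. nra. }
      destruct (Hwcv (t * A / 4)) as [N1 HC1]. apply Rmult_lt_0_compat; [apply Rmult_lt_0_compat|]; lra.
      destruct (HN2u (t * A / 4)) as [N2' HC2]. apply Rmult_lt_0_compat; [apply Rmult_lt_0_compat|]; lra.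
      set (n := max N1 N2').
      specialize (HC1 n (Nat.le_max_l _ _)); specialize (HC2 n (Nat.le_max_r _ _)).
      unfold R_dist in HC1, HC2. rewrite Rminus_0_r in HC1, HC2. apply Rabs_def2 in HC1. apply Rabs_def2 in HC2.
      destruct (S_l2 (u n) (Hu n)) as [Hun1 Hun2].
      assert (L1 : l2 m (fsub (w n) wl)) by (apply l2_sub; auto).
      assert (L2 : l2 m (fsub (u n) ul)) by (apply l2_sub; auto).
      pose proof (inner_bound V m Hm z (fsub (w n) wl) t Ht Hz1 L1) as B1.
      pose proof (inner_bound V m Hm (S z) (fsub (u n) ul) t Ht Hz2 L2) as B2.
      pose proof (Ha n) as Ean.
      pose proof (Cnorm_triangle (inner m z (fsub (w n) wl)) (Copp (inner m (S z) (fsub (u n) ul)))) as Tr.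
      rewrite Cnorm_opp in Tr. unfold Csub in Ean. rewrite <- Ean in Tr. fold A in Tr.
      assert (E4 : / t * (t * A / 4) = A / 4) by (field; lra).
      assert (/ t * N2 V m (fsub (w n) wl) <= A / 4).
      { rewrite <- E4. apply Rmult_le_compat_l. left; apply Rinv_0_lt_compat; lra. lra. }
      assert (/ t * N2 V m (fsub (u n) ul) <= A / 4).
      { rewrite <- E4. apply Rmult_le_compat_l. left; apply Rinv_0_lt_compat; lra. lra. }
      lra. }
    apply Cnorm_zero in H. unfold a in H.
    apply Ceq; [pose proof (f_equal re H)|pose proof (f_equal im H)]; simpl in H0; lra. }
  destruct HS as [_ [_ Hc']].
  destruct (proj1 (Hc' ul wl Hul Hwll) Hadj) as [Dul Sul].
  split; auto.
  apply (Un_cv_ext (fun n => N2 V m (fsub (w n) wl))); auto.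
  intros n. destruct (S_sub (u n) ul) as [_ E]; auto. unfold N2. rewrite E, Sul. reflexivity.
Qed.

End SA.

Theorem mainTheorem5 (V : Type) (m : V -> R) (b : V -> V -> R) (c : V -> R)
  (HV : countable V) (Hm : forall x, 0 < m x)
  (Hg : is_graph b c) (HFC : FC m b c)
  (DL : (V -> Cplx) -> Prop) (L : (V -> Cplx) -> (V -> Cplx))
  (HL : nonneg_selfadjoint m DL L)
  (DS : (V -> Cplx) -> Prop) (S : (V -> Cplx) -> (V -> Cplx))
  (HS : is_sqrt m DL L DS S) :
  condC m b c DS (fun u v => inner m (S u) (S v)) <-> restriction m b c DL L.
Proof.
  destruct HS as [[HSsa _] [HDL HLS]].
  destruct HL as [HLsa _].
  assert (Hsym : forall x y, b x y = b y x) by apply Hg.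
  assert (Hbxx : forall x, b x x = 0) by apply Hg.
  split.
  - intros [[Hnn Hcl] [HC1 HC2]]. intros u Hu.
    destruct (proj1 (HDL u) Hu) as [HuS HSuS].
    set (e := fun x y => if Vdec V y x then RtoC 1 else C0).
    assert (HeCc : forall x, Cc (e x)).
    { intros x. exists (x :: nil). intros y Hy. unfold e in Hy. destruct (Vdec V y x); simpl; auto. }
    assert (He0 : forall x y, y <> x -> e x y = C0).
    { intros x y H; unfold e; destruct (Vdec V y x); congruence. }
    assert (He1 : forall x, e x x = RtoC 1).
    { intros x; unfold e; destruct (Vdec V x x); congruence. }
    assert (HLe : forall x y, Ltilde m b c (e x) y =
       Cmul (RtoC (/ m y)) (Csub (Cmul (e x y) (RtoC (deg V b y + c y))) (RtoC (b y x)))).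
    { intros x y. rewrite (Ltilde_Cc V m b c Hg (e x) y (x :: nil)).
      f_equal. f_equal. unfold fsumC; simpl. rewrite He1. ceq.
      constructor; [simpl; tauto|constructor].
      intros z Hz. apply He0. intro; subst; apply Hz; simpl; auto. }
    set (g := fun x y => Cmul (Cmul (u y) (Cconj (Ltilde m b c (e x) y))) (RtoC (m y))).
    assert (Hgx : forall x, g x x = Cmul (u x) (RtoC (deg V b x + c x))).
    { intros x. unfold g. rewrite HLe, He1, Hbxx. pose proof (Hm x). apply Ceq; simpl; field; lra. }
    assert (Hgy : forall x y, y <> x -> g x y = Copp (Cmul (RtoC (b x y)) (u y))).
    { intros x y Hyx. unfold g. rewrite HLe, He0, (Hsym y x) by auto. pose proof (Hm y).
      apply Ceq; simpl; field; lra. }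
    assert (Hft : Ftilde b u).
    { intros x. destruct (HC2 u (e x) HuS (HeCc x)) as [Ha _].
      apply (abs_le V _ (g x) 1); auto. intros y. rewrite Rmult_1_l.
      destruct (classic (y = x)) as [E|E].
      + subst. rewrite Hbxx. replace (Cmul (RtoC 0) (u x)) with C0 by ceq. rewrite Cnorm_C0. apply Cnorm_ge0.
      + rewrite (Hgy x y E), Cnorm_opp. apply Rle_refl. }
    split; auto.
    apply functional_extensionality. intros x.
    set (T := csum (fun y => Cmul (RtoC (b x y)) (u y))).
    assert (HT : has_sum (fun y => Cmul (RtoC (b x y)) (u y)) T) by (apply abs_csum; apply Hft).
    rewrite (Ltilde_formula V m b c Hg u x T HT).
    assert (E1 : inner m (S u) (S (e x)) = Csub (Cmul (u x) (RtoC (deg V b x + c x))) T).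
    { destruct (HC2 u (e x) HuS (HeCc x)) as [_ Hq]. rewrite <- Hq. apply csum_spec.
      assert (Hs1 : has_sum (fun y => if Vdec V y x then g x y else C0) (Cmul (u x) (RtoC (deg V b x + c x)))).
      { pose proof (has_sum_single V (fun y => if Vdec V y x then g x y else C0) x) as Hs.
        rewrite <- Hgx. replace (g x x) with (if Vdec V x x then g x x else C0) by (destruct (Vdec V x x); congruence). apply Hs.
        intros y Hy. destruct (Vdec V y x); congruence. }
      eapply has_sum_ext; [|apply has_sum_sub; [apply Hs1| apply HT]].
      intros y. cbv beta. match goal with |- ?L = _ => change (L = g x y) end. destruct (Vdec V y x) as [E|E].
      + subst y. rewrite Hgx, Hbxx. ceq.
      + rewrite (Hgy x y E). ceq. }
    assert (E2 : inner m (L u) (e x) = Cmul (L u x) (RtoC (m x))).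
    { apply csum_spec. replace (Cmul (L u x) (RtoC (m x))) with (isum V m (L u) (e x) x)
        by (unfold isum; rewrite He1; ceq).
      apply has_sum_single. intros y Hy. unfold isum. rewrite He0; auto. ceq. }
    rewrite HLS in E2 by auto. rewrite (symS V m DS S HSsa) in E2; auto.
    rewrite E1 in E2. rewrite HLS by auto.
    pose proof (Hm x).
    apply Ceq; [pose proof (f_equal re E2)| pose proof (f_equal im E2)]; simpl in *; field_simplify; try lra;
      apply (Rmult_eq_reg_r (m x)); try lra; field_simplify; try lra.
  - intros Hres.
    assert (HA : forall v, Cc v -> DL v /\ L v = Ltilde m b c v).
    { intros v Hv. destruct HLsa as [_ [_ Hc]].
      apply (proj1 (Hc v (Ltilde m b c v) (Cc_l2 V m v Hv) (HFC v Hv))).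
      intros u Hu. destruct (Hres u Hu) as [Hft Heq]. rewrite Heq. apply Green; auto. }
    split; [split|split].
    + intros u Hu. destruct (S_l2 V m DS S HSsa u Hu) as [_ H2].
      split. apply inner_uu_im; auto. apply (N2_nonneg V m Hm); auto.
    + apply S_closed; auto.
    + intros v Hv. apply HDL, HA; auto.
    + intros u v Hu Hv. destruct (HA v Hv) as [HDv HLv].
      destruct (proj1 (HDL v) HDv) as [HvS HSvS].
      split.
      * apply (isum_abs V m Hm). apply (S_l2 V m DS S HSsa); auto. apply HFC; auto.
      * change (inner m u (Ltilde m b c v) = inner m (S u) (S v)).
        rewrite <- HLv, HLS by auto. symmetry. apply (symS V m DS S HSsa); auto.
Qed.
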